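(* For $n\ge 2$, let $Q_n$ be the $n$-dimensional hypercube graph and let $c_1(Q_n)$ be the largest invariant factor (the exponent) of its sandpile group $K(Q_n)$. Then $$v_2(c_1(Q_n))=\max\Big\{\max_{1\le x<n}\{v_2(x)+x\},\; v_2(n)+n-1\Big\}.$$
   Context: $Q_n$ is the graph with vertex set $\mathbb{F}_2^n$ in which $u,w$ are adjacent iff they differ in exactly one coordinate. Its Laplacian is $L=D-A$ ($D$ the degree matrix, $A$ the adjacency matrix), and $\operatorname{coker}(L:\mathbb{Z}^{2^n}\to\mathbb{Z}^{2^n})\cong\mathbb{Z}\oplus K(Q_n)$ with $K(Q_n)$ a finite abelian group (the sandpile group). $v_2(x)$ denotes the exponent of the largest power of $2$ dividing the integer $x$. *)

(* Defs.v *)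
From HB Require Import structures.
From mathcomp Require Import all_boot all_order all_algebra.
Set Implicit Arguments. Unset Strict Implicit. Unset Printing Implicit Defensive.
Import Order.TTheory GRing.Theory Num.Theory.
Local Open Scope ring_scope.

Definition cube_vertex (n : nat) := {ffun 'I_n -> bool}.

Definition cube_adj (n : nat) (u w : cube_vertex n) : bool :=
  #|[set i : 'I_n | u i != w i]| == 1%N.

Definition cube_deg (n : nat) (u : cube_vertex n) : nat :=
  #|[set w : cube_vertex n | cube_adj u w]|.

Definition cube_N (n : nat) : nat := #|{: cube_vertex n}|.

Definition cube_laplacian (n : nat) : 'M[int]_(cube_N n) :=
  \matrix_(i, j)
    ((if i == j then (cube_deg (enum_val i))%:Z else 0)
     - (if cube_adj (enum_val i) (enum_val j) then 1 else 0)).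

Definition in_lap_image (n : nat) (v : 'cV[int]_(cube_N n)) : Prop :=
  exists x : 'cV[int]_(cube_N n), cube_laplacian n *m x = v.

(* The class of v in coker L is a torsion element, i.e. lies in K(Q_n). *)
Definition coker_torsion (n : nat) (v : 'cV[int]_(cube_N n)) : Prop :=
  exists k : nat, (0 < k)%N /\ in_lap_image (v *+ k).

Definition annihilates_sandpile (n m : nat) : Prop :=
  forall v : 'cV[int]_(cube_N n), coker_torsion v -> in_lap_image (v *+ m).

(* m is the exponent of K(Q_n) (= its largest invariant factor c_1). *)
Definition is_sandpile_exponent (n m : nat) : Prop :=
  [/\ (0 < m)%N, annihilates_sandpile n m &
      forall m', (0 < m')%N -> annihilates_sandpile n m' -> (m <= m')%N].

(* Main.v *)
Require Import Defs.
From mathcomp Require Import all_boot all_order all_algebra.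
From mathcomp Require Import ring lra zify.
From Stdlib Require Import Classical.
Set Implicit Arguments. Unset Strict Implicit. Unset Printing Implicit Defensive.
Import Order.TTheory GRing.Theory Num.Theory.
Local Open Scope ring_scope.

Section Cube.
Variable n : nat.
Local Notation V := (cube_vertex n).

Definition flip (v : V) (i : 'I_n) : V := [ffun j => if j == i then ~~ v j else v j].

Lemma flipK i : involutive (flip^~ i).
Proof. by move=> v; apply/ffunP=> j; rewrite !ffunE; case: eqP => // _; rewrite negbK. Qed.

Lemma flip_inj v : injective (flip v).
Proof.
move=> i j /ffunP /(_ i); rewrite !ffunE eqxx; case: eqP => // _.
by case: (v i).
Qed.

Lemma eq_flipE (v w : V) i : (w == flip v i) = ([set j | v j != w j] == [set i]).
Proof.
apply/eqP/eqP => [-> | H].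
  apply/setP=> j; rewrite !inE ffunE; case: (j =P i) => _ //.
  by case: (v j).
  by rewrite eqxx.
apply/ffunP=> j; rewrite ffunE; move/setP: H => /(_ j); rewrite !inE.
by case: (j =P i) => _; case: (v j); case: (w j).
Qed.

Lemma sum_adj (R : nmodType) (v : V) (F : V -> R) :
  \sum_(w | cube_adj v w) F w = \sum_(i < n) F (flip v i).
Proof.
have -> : \sum_(i < n) F (flip v i) = \sum_(i < n) \sum_(w | w == flip v i) F w.
  by apply: eq_bigr => i _; rewrite big_pred1_eq.
rewrite (exchange_big_dep xpredT) // [LHS]big_mkcond.
apply: eq_bigr => w _.
rewrite (eq_bigl (fun i => [set j | v j != w j] == [set i] :> {set 'I_n})); last by move=> i; rewrite andTb eq_flipE.
rewrite /cube_adj.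
case: (boolP (#|[set j | v j != w j]| == 1%N)) => [/cards1P [i0 HD] | H].
  rewrite HD (eq_bigl (pred1 i0)) ?big_pred1_eq ?eqxx //.
  by move=> j; rewrite /= (inj_eq (@set1_inj _)) eq_sym.
rewrite big_pred0 //.
by move=> j; apply/negbTE; apply: contra H => /eqP ->; rewrite cards1.
Qed.

Lemma cube_degE (v : V) : cube_deg v = n.
Proof.
rewrite /cube_deg -sum1_card.
rewrite (eq_bigl (fun w => cube_adj v w)); last by move=> w; rewrite inE.
have := sum_adj v (fun _ => 1%N); rewrite /= => ->.
by rewrite sum1_card card_ord.
Qed.

Definition lapf (R : zmodType) (f : V -> R) (v : V) : R :=
  f v *+ n - \sum_(i < n) f (flip v i).

Lemma bridge (x : 'cV[int]_(cube_N n)) (v : V) :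
  (cube_laplacian n *m x) (enum_rank v) 0 = lapf (fun w => x (enum_rank w) 0) v.
Proof.
rewrite !mxE /lapf.
rewrite (reindex (@enum_rank _)) /=; last first.
  by apply: onW_bij; apply: enum_rank_bij.
under eq_bigr => w _ do rewrite !mxE !enum_rankK mulrBl.
rewrite sumrB (bigD1 v) //= eqxx big1 /=; last first.
  by move=> w /negbTE Hw; rewrite (inj_eq enum_rank_inj) eq_sym Hw mul0r.
rewrite addr0 cube_degE; congr (_ - _).
  by rewrite mulrC -[X in _ * X]natz mulr_natr.
rewrite -(sum_adj v (fun w => x (enum_rank w) 0)) [RHS]big_mkcond /=; apply: eq_bigr => w _.
by case: ifP; rewrite ?mul1r ?mul0r.
Qed.


Definition vxor (u a : V) : V := [ffun j => u j (+) a j].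
Definition v0 : V := [ffun => false].
Definition wt (u : V) : nat := (\sum_(j < n) (u j : nat))%N.

Lemma wt_flip (u : V) (i : 'I_n) : wt (flip u i) = if u i then (wt u).-1 else (wt u).+1.
Proof.
rewrite /wt (bigD1 i) //= [in RHS](bigD1 i) //= ffunE eqxx.
rewrite (eq_bigr (fun j => (u j : nat))); last by move=> j /negbTE Hj; rewrite ffunE Hj.
by case: (u i).
Qed.

Lemma wt_compl u : (wt u + \sum_(j < n) (~~ u j : nat))%N = n.
Proof.
rewrite /wt -big_split /= -[RHS]card_ord -sum1_card.
by apply: eq_bigr => j _; case: (u j).
Qed.

Lemma wt_le u : (wt u <= n)%N.
Proof. by rewrite -[X in (_ <= X)%N](wt_compl u) leq_addr. Qed.

Lemma wt_lt (u : V) (i : 'I_n) : ~~ u i -> (wt u < n)%N.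
Proof.
move=> Hi; rewrite -[X in (_ < X)%N](wt_compl u) -addn1 leq_add2l.
by rewrite (bigD1 i) //= Hi.
Qed.

Lemma wt0 u : wt u = 0%N -> u = v0.
Proof.
move=> H; apply/ffunP => j; rewrite ffunE.
by apply/negbTE/negP => Hj; move: H; rewrite /wt (bigD1 j) //= Hj add1n.
Qed.

Lemma wt_v0 : wt v0 = 0%N.
Proof. by rewrite /wt big1 // => j _; rewrite ffunE. Qed.

Lemma sum_if (R : nmodType) (u : V) (A B : R) :
  \sum_(i < n) (if u i then A else B) = A *+ wt u + B *+ (n - wt u).
Proof.
have -> : (n - wt u)%N = (\sum_(j < n) (~~ u j : nat))%N.
  by have := wt_compl u; move=> {1}<-; rewrite addKn.
rewrite /wt -!sumrMnr -big_split /=.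
by apply: eq_bigr => j _; case: (u j); rewrite /= ?mulr1n ?mulr0n ?addr0 ?add0r.
Qed.

Lemma vxor_flip (h a : V) (i : 'I_n) : vxor (flip h i) a = flip (vxor h a) i.
Proof. by apply/ffunP=> j; rewrite !ffunE; case: (j == i); rewrite ?addNb. Qed.

Lemma flip_vxor (h a : V) (i : 'I_n) : flip (vxor h a) i = vxor h (flip a i).
Proof. by apply/ffunP=> j; rewrite !ffunE; case: (j == i); rewrite ?addbN. Qed.

Lemma vxor_eq0 h a : (vxor h a == v0) = (h == a).
Proof.
apply/eqP/eqP => [H | ->].
  apply/ffunP => j; move/ffunP: H => /(_ j); rewrite !ffunE.
  by case: (h j); case: (a j).
by apply/ffunP => j; rewrite !ffunE addbb.
Qed.

Lemma vxorv0 h : vxor h v0 = h.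
Proof. by apply/ffunP => j; rewrite !ffunE addbF. Qed.

Lemma eq_lapf (R : zmodType) (f g : V -> R) : f =1 g -> forall h, lapf f h = lapf g h.
Proof. by move=> E h; rewrite /lapf E; congr (_ - _); apply: eq_bigr => i _; rewrite E. Qed.

Lemma lapf_xor (R : zmodType) (f : V -> R) a h :
  lapf (fun w => f (vxor w a)) h = lapf f (vxor h a).
Proof. by rewrite /lapf; congr (_ - _); apply: eq_bigr => i _; rewrite vxor_flip. Qed.

Lemma lapfB (R : zmodType) (f g : V -> R) h :
  lapf (fun w => f w - g w) h = lapf f h - lapf g h.
Proof.
rewrite /lapf sumrB mulrnBl !opprB addrACA [in RHS]addrACA.
by congr (_ + _); rewrite addrC.
Qed.

Lemma lapfC (R : zmodType) (c : R) h : lapf (fun _ => c) h = 0.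
Proof. by rewrite /lapf sumr_const card_ord subrr. Qed.

Lemma lapfM (R : pzRingType) (c : R) (f : V -> R) h :
  lapf (fun w => c * f w) h = c * lapf f h.
Proof. by rewrite /lapf mulrBr mulrnAr mulr_sumr. Qed.

Lemma lapf_sym (R : comPzRingType) (f g : V -> R) :
  \sum_h f h * lapf g h = \sum_h lapf f h * g h.
Proof.
rewrite /lapf.
under eq_bigr => h _ do rewrite mulrBr mulr_sumr.
under [RHS]eq_bigr => h _ do rewrite mulrBl mulr_suml.
rewrite !sumrB; congr (_ - _).
  by apply: eq_bigr => h _; rewrite mulrnAr mulrnAl.
rewrite exchange_big [RHS]exchange_big /=; apply: eq_bigr => i _.
rewrite (reindex_inj (can_inj (flipK i))) /=.
by apply: eq_bigr => h _; rewrite flipK mulrC.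
Qed.

Lemma lapf_intr (R : numDomainType) (X : V -> int) h :
  ((lapf X h)%:~R : R) = lapf (fun w => (X w)%:~R) h.
Proof. by rewrite /lapf rmorphB /= rmorphMn rmorph_sum. Qed.

End Cube.

Section KG.
Variable n : nat.
Local Notation N := n.-1.

Definition Kt (w i : nat) : rat :=
  (-1) ^+ i * ('C(N - w, i))%:R * 2%:R ^+ (N - w - i) / ((w + i).+1)%:R.

Definition Kc (w : nat) : rat := \sum_(i < (N - w).+1) Kt w i.

Lemma binom_one a : \sum_(j < a.+1) (-1) ^+ j * 2%:R ^+ (a - j) * ('C(a, j))%:R = 1 :> rat.
Proof.
have E : (2%:R - 1 : rat) = 1 by rewrite -addn1 natrD addrK.
transitivity ((2%:R - 1 : rat) ^+ a); last by rewrite E expr1n.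
rewrite exprBn; apply: eq_bigr => j _.
by rewrite expr1n mulr1 mulr_natr.
Qed.

Lemma Krec w : (w < N)%N -> (w.+1)%:R * Kc w - (N - w)%:R * Kc w.+1 = 1.
Proof.
move=> Hw.
have Ha : (N - w = (N - w.+1).+1)%N by rewrite subnS prednK // subn_gt0.
rewrite /Kc Ha big_ord_recl mulrDr.
set a' := (N - w.+1)%N.
rewrite mulr_sumr [X in _ - X]mulr_sumr.
rewrite -addrA -sumrB.
rewrite -[RHS](binom_one a'.+1) [RHS]big_ord_recl.
congr (_ + _).
  rewrite /Kt Ha subn0 bin0 addn0 expr0 !mul1r.
  by field; rewrite addrC natr1 pnatr_eq0.
apply: eq_bigr => i _.
rewrite /Kt Ha /= /bump /= add1n.
rewrite (_ : (N - w.+1)%N = a') //.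
have Hb : (a'.+1)%:R * ('C(a', i))%:R = (i.+1)%:R * ('C(a'.+1, i.+1))%:R :> rat.
  by rewrite -!natrM (mul_bin_diag a'.+1 i).
rewrite subSS.
set c := ('C(a'.+1, i.+1))%:R : rat.
set d := ('C(a', i))%:R : rat.
set X := 2%:R ^+ (a' - i) : rat.
have -> : (a'.+1)%:R * ((-1) ^+ i * d * X / ((w.+1 + i).+1)%:R)
   = (-1) ^+ i * ((a'.+1)%:R * d) * X / ((w.+1 + i).+1)%:R by ring.
rewrite Hb exprS.
have Hn : ((w.+1 + i).+1)%:R != 0 :> rat by rewrite pnatr_eq0.
rewrite (_ : (w + i.+1).+1 = (w.+1 + i).+1)%N; last by rewrite addnS addSn.
rewrite (_ : ((w.+1 + i).+1)%:R = (w.+1)%:R + (i.+1)%:R :> rat) in Hn *; last first.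
  by rewrite -natrD addSn addnS.
field; apply/lt0r_neq0; have := ler0n rat w; have := ler0n rat i; lra.
Qed.

Lemma K0 : (0 < n)%N -> n%:R * Kc 0 = 2%:R ^+ n - 1.
Proof.
move=> Hn.
have HN : n = N.+1 by rewrite prednK.
have H := binom_one n.
rewrite big_ord_recl subn0 expr0 mul1r bin0 mulr1 in H.
have {}H := congr1 (fun x => x - 2%:R ^+ n) H; rewrite /= addrC addKr in H.
rewrite -[RHS]opprB -H -sumrN.
rewrite /Kc subn0 mulr_sumr; rewrite [in RHS]HN; apply: eq_bigr => i _.
rewrite /Kt subn0 add0n /bump /= add1n.
have Hb : (N.+1)%:R * ('C(N, i))%:R = (i.+1)%:R * ('C(N.+1, i.+1))%:R :> rat.
  by rewrite -!natrM (mul_bin_diag N.+1 i).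
have Hn' : n%:R = (N.+1)%:R :> rat by rewrite -HN.
rewrite Hn' subSS.
set c := ('C(N.+1, i.+1))%:R : rat.
set d := ('C(N, i))%:R : rat.
set X := 2%:R ^+ (N - i) : rat.
have -> : (N.+1)%:R * ((-1) ^+ i * d * X / (i.+1)%:R)
   = (-1) ^+ i * ((N.+1)%:R * d) * X / (i.+1)%:R by ring.
rewrite Hb exprS.
field; apply/lt0r_neq0; have := ler0n rat i; lra.
Qed.

Lemma KN : (0 < n)%N -> Kc N = n%:R^-1.
Proof.
move=> Hn; rewrite /Kc subnn big_ord1 /Kt subnn bin0 !expr0 addn0 prednK //.
by rewrite !mul1r.
Qed.

Definition Hc (k : nat) : rat := \sum_(w < k) Kc w.

Lemma HcS k : Hc k.+1 = Hc k + Kc k.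
Proof. by rewrite /Hc big_ord_recr. Qed.

Definition Gv (u : cube_vertex n) : rat := - Hc (wt u) / 2%:R ^+ n.

Lemma wt_pos (u : cube_vertex n) i : u i -> (0 < wt u)%N.
Proof. by move=> Hi; rewrite /wt (bigD1 i) //= Hi. Qed.

Lemma alg_aux (A B C D : rat) (k m n' : nat) :
  n' = (k.+1 + m)%N -> k.+1%:R * B - m%:R * C = 1 ->
  (A - B * D) *+ n' - (A *+ k.+1 + (A - B * D - C * D) *+ m) = false%:R - D.
Proof.
move=> -> H.
transitivity (- ((k.+1%:R * B - m%:R * C) * D)); last by rewrite H mul1r /= sub0r.
ring.
Qed.

Definition gg (m : nat) : rat := - Hc m / 2%:R ^+ n.

Lemma lapG (u : cube_vertex n) :
  (0 < n)%N -> lapf Gv u = (u == v0 n)%:R - (2%:R ^+ n)^-1.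
Proof.
move=> Hn.
have H2 : 2%:R ^+ n != 0 :> rat by rewrite expf_neq0 // pnatr_eq0.
have Hs : \sum_(i < n) Gv (flip u i) = gg (wt u).-1 *+ wt u + gg (wt u).+1 *+ (n - wt u).
  rewrite -sum_if; apply: eq_bigr => i _.
  by rewrite /Gv wt_flip; case: (u i).
rewrite /lapf Hs.
have -> : Gv u = gg (wt u) by [].
case Hk: (wt u) => [|k].
  have -> : u = v0 n by apply: wt0.
  rewrite eqxx subn0 mulr0n add0r.
  have -> : gg 0 = 0 by rewrite /gg /Hc big_ord0 oppr0 mul0r.
  have -> : gg 1 = - (Kc 0 / 2%:R ^+ n) by rewrite /gg HcS /Hc big_ord0 add0r mulNr.
  rewrite mul0rn sub0r mulNrn opprK -[_ *+ n]mulr_natl mulrA K0 // mulrBl divff //.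
  by rewrite mul1r.
have -> : (u == v0 n) = false.
  by apply/negbTE/eqP => Hu; move: Hk; rewrite Hu wt_v0.
have Hkn : (k < n)%N by rewrite -Hk; apply: wt_le.
have E1 : gg k.+1 = gg k - Kc k / 2%:R ^+ n by rewrite /gg HcS; ring.
have E2 : gg k.+2 = gg k.+1 - Kc k.+1 / 2%:R ^+ n by rewrite /gg HcS; ring.
rewrite E2 E1 /=.
set m := (n - k.+1)%N.
have HK : (k.+1)%:R * Kc k - m%:R * Kc k.+1 = 1.
  case: (ltnP k.+1 n) => Hk1.
    have := Krec (w := k); rewrite (_ : (N - k)%N = m); last by rewrite /m; lia.
    by apply; rewrite -ltnS prednK.
  have Ekn : k.+1 = n by apply/eqP; rewrite eqn_leq Hk1 Hkn.
  rewrite /m Ekn subnn mul0r subr0.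
  have -> : k = N by rewrite -Ekn.
  by rewrite KN // divff // pnatr_eq0 -lt0n.
have En : n = (k.+1 + m)%N by rewrite /m subnKC.
exact: alg_aux.
Qed.

Definition rr (a : cube_vertex n) (i : 'I_n) (h : cube_vertex n) : rat :=
  Gv (vxor h a) - Gv (flip (vxor h a) i).

Lemma lap_rr a i h : (0 < n)%N ->
  lapf (rr a i) h = (h == a)%:R - (h == flip a i)%:R.
Proof.
move=> Hn; rewrite /rr lapfB.
rewrite (@eq_lapf _ _ (fun w => Gv (flip (vxor w a) i)) (fun w => Gv (vxor w (flip a i)))); last first.
  by move=> w; rewrite flip_vxor.
rewrite !(lapf_xor Gv) !lapG // !vxor_eq0.
by rewrite opprB addrA subrK.
Qed.

Lemma rr_val (u : cube_vertex n) i :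
  Gv u - Gv (flip u i) =
  if u i then - (Kc (wt u).-1 / 2%:R ^+ n) else Kc (wt u) / 2%:R ^+ n.
Proof.
rewrite /Gv wt_flip.
case Hu: (u i).
  have := wt_pos Hu; case: (wt u) => [|k] //= _.
  by rewrite HcS; ring.
by rewrite HcS; ring.
Qed.

End KG.

Lemma odd_part2 m : odd (m`_(2^'))%N.
Proof.
have := coprime_partC 2%N 2%N m.
by rewrite p_part (pfactorK 1 (isT : prime 2)) coprime2n.
Qed.

Lemma term_eq (a v k b ko q : nat) : (0 < ko)%N ->
  ((2 ^ (a + v + k) * (ko * q))%N%:R / 2%:R ^+ (b + k) * (2%:R ^+ b / (2 ^ v * ko)%N%:R) : rat)
  = (2 ^ a * q)%N%:R.
Proof.
move=> Hko; rewrite !natrM !natrX !exprD.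
have H0 : ko%:R != 0 :> rat by rewrite pnatr_eq0 -lt0n.
have H2 : (2%:R : rat) != 0 by rewrite pnatr_eq0.
by field; rewrite H0 !expf_neq0.
Qed.

Lemma sign_half (a b : nat) : (((-1) ^+ a - (-1) ^+ b) / 2%:R : rat) \is a Num.int.
Proof.
rewrite -signr_odd -[(-1) ^+ b]signr_odd.
case: (odd a); case: (odd b); rewrite /= ?expr0 ?expr1.
- by rewrite subrr mul0r rpred0.
- rewrite (_ : (-1 - 1) / 2%:R = -1 :> rat); first by rewrite rpredN rpred1.
  by field.
- rewrite (_ : (1 - -1) / 2%:R = 1 :> rat); first by rewrite rpred1.
  by field.
- by rewrite subrr mul0r rpred0.
Qed.

Lemma int_dvd (a b : nat) : (0 < b)%N -> (a%:R / b%:R : rat) \is a Num.int -> (b %| a)%N.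
Proof.
move=> Hb; rewrite intrEfloor => /eqP Hz.
set z := Num.floor _ in Hz.
have Hb0 : b%:R != 0 :> rat by rewrite pnatr_eq0 -lt0n.
have : (a%:R : rat) = (z * b%:Z)%:~R by rewrite rmorphM /= Hz mulfVK.
rewrite -[a%:R]/((a%:Z)%:~R) => /intr_inj /(congr1 absz).
by rewrite abszM /= => ->; apply: dvdn_mull.
Qed.

Lemma notint_half (j : nat) : odd j -> (j%:R / 2%:R : rat) \isn't a Num.int.
Proof.
move=> Hj; apply/negP => /(int_dvd (isT : (0 < 2)%N)).
by rewrite dvdn2 Hj.
Qed.

Section NT.
Variable n : nat.
Hypothesis hn : (2 <= n)%N.
Local Notation N := n.-1.

Definition V2 := (\max_(1 <= x < n) (logn 2 x + x))%N.
Definition EE := maxn V2 (logn 2 n + n - 1)%N.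
Definition Mo := ((n`!)`_(2^'))%N.
Definition CC := (2 ^ EE * Mo)%N.

Lemma n_gt0 : (0 < n)%N. Proof. by apply: leq_trans hn. Qed.

Lemma V2_ge k : (1 <= k)%N -> (k < n)%N -> (logn 2 k + k <= V2)%N.
Proof.
move=> H1 H2; rewrite /V2 big_seq_cond.
apply: (@leq_bigmax_seq _ _ _ (fun x => logn 2 x + x)%N k).
  by rewrite mem_index_iota H1 H2.
by rewrite mem_index_iota H1 H2.
Qed.

Lemma T_int (e k : nat) : (0 < k)%N -> (k <= n)%N -> (k + logn 2 k <= e)%N ->
  ((2 ^ e * Mo)%N%:R / 2%:R ^+ n * (2%:R ^+ (n - k) / k%:R) : rat) \is a Num.int.
Proof.
move=> Hk0 Hkn Hke.
set v := logn 2 k; set ko := (k`_(2^'))%N.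
have Hk : (2 ^ v * ko)%N = k by rewrite -p_part partnC.
have Hdiv : (ko %| Mo)%N by apply: partn_dvd; [exact: fact_gt0 | apply: dvdn_fact; rewrite Hk0].
set q := (Mo %/ ko)%N.
have HMo : (ko * q)%N = Mo by rewrite mulnC divnK.
have Ee : (e - k - v + v + k)%N = e by rewrite /v in Hke *; lia.
have Eb : (n - k + k)%N = n by rewrite subnK.
have := @term_eq (e - k - v) v k (n - k) ko q (part_gt0 _ _).
rewrite Hk Ee Eb HMo => ->.
exact: rpred_nat.
Qed.

Lemma EE_geV k : (1 <= k)%N -> (k < n)%N -> (k + logn 2 k <= EE)%N.
Proof. by move=> H1 H2; rewrite addnC; apply: leq_trans (V2_ge H1 H2) (leq_maxl _ _). Qed.

Lemma EE_gen : (n + logn 2 n <= EE.+1)%N.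
Proof.
apply: leq_trans (_ : (logn 2 n + n - 1).+1 <= EE.+1)%N; last by rewrite ltnS leq_maxr.
have := n_gt0; lia.
Qed.

Lemma Kc_split w : (w <= N)%N ->
  Kc n w = \sum_(i < N - w) Kt n w i + (-1) ^+ (N - w) / n%:R.
Proof.
move=> Hw; rewrite /Kc big_ord_recr /=; congr (_ + _).
rewrite /Kt subnn binn expr0 mulr1 mulr1.
by rewrite (_ : (w + (N - w)).+1 = n)%N //; have := n_gt0; lia.
Qed.

Lemma Kt_int e w (i : nat) : (w <= N)%N -> (i < N - w)%N ->
  ((w + i).+1 + logn 2 (w + i).+1 <= e)%N ->
  ((2 ^ e * Mo)%N%:R / 2%:R ^+ n * Kt n w i : rat) \is a Num.int.
Proof.
move=> Hw Hi He.
have Hkn : ((w + i).+1 <= n)%N by have := n_gt0; lia.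
have := T_int (isT : (0 < (w + i).+1)%N) Hkn He.
rewrite /Kt (_ : (N - w - i = n - (w + i).+1)%N); last by have := n_gt0; lia.
move=> HT.
have -> : (2 ^ e * Mo)%N%:R / 2%:R ^+ n * ((-1) ^+ i * ('C(N - w, i))%:R
    * 2%:R ^+ (n - (w + i).+1) / ((w + i).+1)%:R) = (-1) ^+ i * ('C(N - w, i))%:R *
   ((2 ^ e * Mo)%N%:R / 2%:R ^+ n * (2%:R ^+ (n - (w + i).+1) / ((w + i).+1)%:R)) :> rat by ring.
apply: rpredM HT; apply: rpredM; last exact: rpred_nat.
by apply: rpredX; rewrite rpredN rpred1.
Qed.

Lemma UB w (s : bool) : (w <= N)%N ->
  (CC%:R * ((-1) ^+ s * (Kc n w / 2%:R ^+ n) - Kc n 0 / 2%:R ^+ n) : rat) \is a Num.int.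
Proof.
move=> Hw.
have H0 : (0 <= N)%N by [].
rewrite (Kc_split Hw) (Kc_split H0) subn0.
set S1 := \sum_(i < N - w) _.
set S0 := \sum_(i < N) _.
have HS1 : (CC%:R / 2%:R ^+ n * S1) \is a Num.int.
  rewrite mulr_sumr; apply: rpred_sum => i _.
  apply: Kt_int => //; rewrite ?ltn_ord //.
  apply: EE_geV => //; have := ltn_ord i; have := n_gt0; lia.
have HS0 : (CC%:R / 2%:R ^+ n * S0) \is a Num.int.
  rewrite mulr_sumr; apply: rpred_sum => i _.
  apply: Kt_int => //; rewrite ?subn0 ?ltn_ord //.
  apply: EE_geV => //; have := ltn_ord i; have := n_gt0; lia.
have HZ2 : (CC%:R / 2%:R ^+ n * (2%:R / n%:R) : rat) \is a Num.int.
  have HT := T_int n_gt0 (leqnn n) EE_gen.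
  have -> : CC%:R / 2%:R ^+ n * (2%:R / n%:R) =
     (2 ^ EE.+1 * Mo)%N%:R / 2%:R ^+ n * (2%:R ^+ (n - n) / n%:R) :> rat.
    by rewrite subnn expr0 expnS -mulnA natrM /CC; ring.
  exact: HT.
have Hn0 : n%:R != 0 :> rat by rewrite pnatr_eq0 -lt0n n_gt0.
have -> : CC%:R * ((-1) ^+ s * ((S1 + (-1) ^+ (N - w) / n%:R) / 2%:R ^+ n) -
   (S0 + (-1) ^+ N / n%:R) / 2%:R ^+ n) =
   (-1) ^+ s * (CC%:R / 2%:R ^+ n * S1) - (CC%:R / 2%:R ^+ n * S0)
   + (CC%:R / 2%:R ^+ n * (2%:R / n%:R)) * (((-1) ^+ (s + (N - w)) - (-1) ^+ N) / 2%:R).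
  rewrite exprD; field.
  by rewrite Hn0 /= expf_neq0 // pnatr_eq0.
apply: rpredD; last by apply: rpredM HZ2 (sign_half _ _).
apply: rpredB HS0; apply: rpredM HS1.
by apply: rpredX; rewrite rpredN rpred1.
Qed.

Lemma LB1 m : (0 < m)%N ->
  (m%:R * (Kc n N / 2%:R ^+ n - - (Kc n N / 2%:R ^+ n)) : rat) \is a Num.int ->
  (2 ^ (logn 2 n + n - 1) %| m)%N.
Proof.
move=> Hm; rewrite KN ?n_gt0 // => H.
have Hn0 : n%:R != 0 :> rat by rewrite pnatr_eq0 -lt0n n_gt0.
have : ((m * 2)%N%:R / (n * 2 ^ n)%N%:R : rat) \is a Num.int.
  suff -> : ((m * 2)%N%:R / (n * 2 ^ n)%N%:R : rat) =
    m%:R * (n%:R^-1 / 2%:R ^+ n - - (n%:R^-1 / 2%:R ^+ n)) by [].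
  rewrite natrM natrM natrX; field.
  by rewrite Hn0 expf_neq0 // pnatr_eq0.
move/int_dvd; rewrite muln_gt0 n_gt0 expn_gt0 /= => /(_ isT).
have E2 : (n * 2 ^ n = n * 2 ^ (n - 1) * 2)%N by rewrite -mulnA -expnSr subn1 prednK // n_gt0.
rewrite E2 dvdn_pmul2r // => Hd.
apply: dvdn_trans Hd.
rewrite -addnBA ?n_gt0 // expnD; apply: dvdn_mul; first exact: pfactor_dvdnn.
by rewrite subn1.
Qed.

Lemma Mo_odd : odd Mo. Proof. exact: odd_part2. Qed.

Lemma LB2 m x : (0 < m)%N -> (1 <= x)%N -> (x < n)%N -> (logn 2 x + x)%N = V2 ->
  (forall k, (x < k)%N -> (k < n)%N -> (logn 2 k + k < V2)%N) ->
  (logn 2 n + n - 1 < V2)%N ->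
  (m%:R * (Kc n x.-1 / 2%:R ^+ n - Kc n x / 2%:R ^+ n) : rat) \is a Num.int ->
  (2 ^ V2 %| m)%N.
Proof.
move=> Hm Hx1 Hxn Hx Hmax Hnv H.
have n0 := n_gt0.
set e1 := V2.-1.
have HV : V2 = e1.+1 by rewrite /e1 prednK //; lia.
set A' := (n - x - 1)%N.
have Hw1 : (x.-1 <= N)%N by lia.
have Hw2 : (x <= N)%N by lia.
have EA1 : (N - x.-1 = A'.+1)%N by rewrite /A'; lia.
have EA2 : (N - x = A')%N by rewrite /A'; lia.
have Hn0 : n%:R != 0 :> rat by rewrite pnatr_eq0 -lt0n n_gt0.
have H2n : 2%:R ^+ n != 0 :> rat by rewrite expf_neq0 // pnatr_eq0.
have Hx0 : x%:R != 0 :> rat by rewrite pnatr_eq0 -lt0n.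
set D := 2%:R ^+ n : rat.
set P := (2 ^ e1 * Mo)%N%:R / D : rat.
have HY : (P * (Kc n x.-1 - Kc n x - 2%:R ^+ (n - x) / x%:R)) \is a Num.int.
  rewrite (Kc_split Hw1) (Kc_split Hw2) EA1 EA2 big_ord_recl.
  have -> : Kt n x.-1 0 = 2%:R ^+ (n - x) / x%:R.
    rewrite /Kt EA1 bin0 subn0 addn0 prednK // expr0 !mul1r.
    by rewrite (_ : A'.+1 = n - x)%N //; rewrite /A'; lia.
  set S1 := \sum_(i < A') _.
  set S2 := \sum_(i < A') _.
  have HS1 : (P * S1) \is a Num.int.
    rewrite mulr_sumr; apply: rpred_sum => i _.
    rewrite /P /D; apply: Kt_int => //; rewrite ?EA1 ?ltnS ?ltn_ord //.
    rewrite lift0.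
    have := ltn_ord i; have := Hmax (x.-1 + i.+1).+1; rewrite /A' /e1; lia.
  have HS2 : (P * S2) \is a Num.int.
    rewrite mulr_sumr; apply: rpred_sum => i _.
    rewrite /P /D; apply: Kt_int => //; rewrite ?EA2 ?ltn_ord //.
    have := ltn_ord i; have := Hmax (x + i).+1; rewrite /A' /e1; lia.
  have HZ : ((2 ^ V2 * Mo)%N%:R / D * (2%:R ^+ (n - n) / n%:R)) \is a Num.int.
    by apply: T_int => //; lia.
  have -> : P * (2%:R ^+ (n - x) / x%:R + S1 + (-1) ^+ A'.+1 / n%:R - (S2 + (-1) ^+ A' / n%:R) -
      2%:R ^+ (n - x) / x%:R) = P * S1 - P * S2 +
      ((2 ^ V2 * Mo)%N%:R / D * (2%:R ^+ (n - n) / n%:R)) * (((-1) ^+ A'.+1 - (-1) ^+ A') / 2%:R).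
    rewrite /P HV subnn expr0 expnS -mulnA natrM; field.
    by rewrite Hn0 H2n.
  by apply: rpredD; [apply: rpredB | apply: rpredM HZ (sign_half _ _)].
apply/negPn/negP => Hnd.
set a2 := logn 2 m.
have Ha2 : (a2 < V2)%N.
  by rewrite ltnNge -(pfactor_dvdn _ (isT : prime 2)).
set mo := (m`_(2^'))%N.
have Hmo : (2 ^ a2 * mo)%N = m by rewrite -p_part partnC.
have HZ1 : ((2 ^ (e1 - a2) * Mo)%N%:R * (m%:R * (Kc n x.-1 / D - Kc n x / D))) \is a Num.int.
  by apply: rpredM H; apply: rpred_nat.
have HZ1' : (mo%:R * (P * (Kc n x.-1 - Kc n x))) \is a Num.int.
  suff <- : ((2 ^ (e1 - a2) * Mo)%N%:R * (m%:R * (Kc n x.-1 / D - Kc n x / D)))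
           = (mo%:R * (P * (Kc n x.-1 - Kc n x))) by [].
  rewrite -Hmo /P !natrM !natrX.
  have -> : (2%:R : rat) ^+ e1 = 2%:R ^+ (e1 - a2) * 2%:R ^+ a2 by rewrite -exprD subnK //; lia.
  by field.
set v := logn 2 x; set xo := (x`_(2^'))%N.
have Hxv : (2 ^ v * xo)%N = x by rewrite -p_part partnC //; lia.
have Hdiv : (xo %| Mo)%N by apply: partn_dvd; [exact: fact_gt0 | apply: dvdn_fact; lia].
set q := (Mo %/ xo)%N.
have HMo : (xo * q)%N = Mo by rewrite mulnC divnK.
have Hq : odd q by have := Mo_odd; rewrite -HMo oddM => /andP [].
have HX0 : (P * (2%:R ^+ (n - x) / x%:R)) = q%:R / 2%:R.
  have := @term_eq 0 v x (n - x) xo q (part_gt0 _ _).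
  rewrite Hxv HMo subnK ?(ltnW Hxn) // expn0 mul1n.
  rewrite (_ : (0 + v + x = e1.+1)%N); last by rewrite -HV /v; lia.
  rewrite /P /D expnS -mulnA natrM => <-.
  by field; rewrite Hx0 H2n.
have : ((mo * q)%N%:R / 2%:R : rat) \is a Num.int.
  have -> : ((mo * q)%N%:R / 2%:R : rat) = mo%:R * (P * (Kc n x.-1 - Kc n x)) -
     mo%:R * (P * (Kc n x.-1 - Kc n x - 2%:R ^+ (n - x) / x%:R)).
    by rewrite natrM -mulrA -HX0; ring.
  by apply: rpredB HZ1' _; apply: rpredM HY; apply: rpred_nat.
by apply/negP; apply: notint_half; rewrite oddM odd_part2 Hq.
Qed.

End NT.

Section Main.
Variable n : nat.
Hypothesis hn : (2 <= n)%N.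
Local Notation V := (cube_vertex n).
Local Notation NN := (cube_N n).

Definition dvec (a : V) : 'cV[int]_NN := \col_j ((enum_val j == a)%:R).
Definition vec_of (X : V -> int) : 'cV[int]_NN := \col_j X (enum_val j).

Lemma img_of (X d : V -> int) : (forall h, lapf X h = d h) -> in_lap_image (vec_of d).
Proof.
move=> H; exists (vec_of X); apply/matrixP => j k.
rewrite (ord1 k) -[j](enum_valK j) bridge.
rewrite !mxE enum_rankK -H; apply: eq_lapf => w.
by rewrite mxE enum_rankK.
Qed.

Lemma img_add u v : in_lap_image u -> in_lap_image v -> @in_lap_image n (u + v).
Proof. by move=> [x Hx] [y Hy]; exists (x + y); rewrite mulmxDr Hx Hy. Qed.

Lemma img_opp u : in_lap_image u -> @in_lap_image n (- u).
Proof. by move=> [x Hx]; exists (- x); rewrite mulmxN Hx. Qed.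

Lemma img_scale (z : int) u : in_lap_image u -> @in_lap_image n (z *: u).
Proof. by move=> [x Hx]; exists (z *: x); rewrite -scalemxAr Hx. Qed.

Lemma img0 : @in_lap_image n 0.
Proof. by exists 0; rewrite mulmx0. Qed.

Lemma img_sum (I : finType) (F : I -> 'cV[int]_NN) :
  (forall i, in_lap_image (F i)) -> in_lap_image (\sum_i F i).
Proof.
move=> H; apply: (big_ind (@in_lap_image n)) => //; first exact: img0.
exact: img_add.
Qed.

Lemma img_muln u k : in_lap_image u -> @in_lap_image n (u *+ k).
Proof. by move=> Hu; rewrite -scaler_nat; apply: img_scale. Qed.

Local Notation C0 := (CC n).

Lemma rr_a (a : V) i : rr a i a = Kc n 0 / 2%:R ^+ n.
Proof.
rewrite /rr (rr_val (vxor a a)).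
have -> : vxor a a = v0 n by apply/eqP; rewrite vxor_eq0.
by rewrite ffunE wt_v0.
Qed.

Lemma edge_img (a : V) (i : 'I_n) :
  in_lap_image ((dvec a - dvec (flip a i)) *+ C0).
Proof.
have n0 : (0 < n)%N by apply: leq_trans hn.
set F := fun h => (C0%:R * (rr a i h - rr a i a) : rat).
have HF : forall h, F h \is a Num.int.
  move=> h; rewrite /F rr_a /rr rr_val.
  set u := vxor h a.
  case Hu: (u i).
    have := UB hn (w := (wt u).-1) true; rewrite expr1 mulN1r; apply.
    by have := wt_le u; lia.
  have := UB hn (w := wt u) false; rewrite expr0 mul1r; apply.
  by have := wt_lt (negbT Hu); lia.
set X := fun h => Num.floor (F h).
have HX : forall h, (X h)%:~R = F h by move=> h; rewrite /X floorK // HF.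
have -> : (dvec a - dvec (flip a i)) *+ C0 =
    vec_of (fun h => ((h == a)%:R - (h == flip a i)%:R) *+ C0).
  by apply/matrixP => j k; rewrite mulmxnE !mxE.
apply: (img_of (X := X)) => h.
apply: (@intr_inj rat); rewrite lapf_intr.
rewrite (eq_lapf HX) /F.
rewrite (@lapfM _ _ C0%:R (fun w => rr a i w - rr a i a)).
rewrite lapfB lapfC subr0 lap_rr //.
rewrite rmorphMn rmorphB /= !rmorph_nat mulr_natl.
by case: (h == a); case: (h == flip a i).
Qed.
Lemma path_img (u : V) : in_lap_image ((dvec u - dvec (v0 n)) *+ C0).
Proof.
move: {2}(wt u) (erefl (wt u)) => k; elim: k u => [|k IH] u Hk.
  by rewrite (wt0 Hk) subrr mul0rn; exact: img0.
have [i Hi] : exists i, u i.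
  apply/existsP; apply: contraT; rewrite negb_exists => /forallP Hf.
  have : u = v0 n by apply/ffunP => j; rewrite ffunE; apply/negbTE; apply: Hf.
  by move=> Hu; move: Hk; rewrite Hu wt_v0.
have -> : dvec u - dvec (v0 n) = (dvec u - dvec (flip u i)) + (dvec (flip u i) - dvec (v0 n)).
  by rewrite addrA subrK.
rewrite mulrnDl; apply: img_add; first exact: edge_img.
by apply: IH; rewrite wt_flip Hi Hk.
Qed.

Lemma sum0_img (v : 'cV[int]_NN) : \sum_j v j 0 = 0 -> in_lap_image (v *+ C0).
Proof.
move=> H0.
have -> : v *+ C0 = \sum_j (v j 0) *: ((dvec (enum_val j) - dvec (v0 n)) *+ C0).
  apply/matrixP => k l; have -> : l = 0 by exact: ord1.
  rewrite mulmxnE summxE.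
  under eq_bigr => j _ do rewrite mxE mulmxnE !mxE (inj_eq enum_val_inj).
  under eq_bigr => j _ do rewrite mulrnBl mulrBr.
  rewrite sumrB -(big_distrl) /=.
  set t := (_ == v0 n)%:R *+ C0.
  rewrite H0 mul0r subr0 (bigD1 k) //= eqxx big1 ?addr0.
    by rewrite mulr_natr.
  by move=> j /negbTE; rewrite eq_sym => ->; rewrite /= mul0rn mulr0.
by apply: img_sum => j; apply: img_scale; apply: path_img.
Qed.

Lemma lapf_sum0 (R : zmodType) (f : V -> R) : \sum_h lapf f h = 0.
Proof.
rewrite /lapf sumrB sumrMnl exchange_big /=.
have E : forall i : 'I_n, \sum_h f (flip h i) = \sum_h f h.
  by move=> i; rewrite (reindex_inj (can_inj (flipK i))) /=; apply: eq_bigr => h _; rewrite flipK.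
under [X in _ - X]eq_bigr => i _ do rewrite E.
by rewrite sumr_const card_ord subrr.
Qed.

Lemma torsion_sum0 (v : 'cV[int]_NN) : coker_torsion v -> \sum_j v j 0 = 0.
Proof.
move=> [k [Hk [x Hx]]].
have : \sum_j (cube_laplacian n *m x) j 0 = 0.
  rewrite (reindex (@enum_rank _)) /=; last by apply: onW_bij; apply: enum_rank_bij.
  under eq_bigr => h _ do rewrite bridge.
  exact: lapf_sum0.
rewrite Hx.
under eq_bigr => j _ do rewrite mulmxnE.
rewrite sumrMnl => /eqP; rewrite mulrn_eq0 => /orP [|/eqP //].
by rewrite eqn0Ngt Hk.
Qed.

Lemma ann_C0 : annihilates_sandpile n C0.
Proof. by move=> v /torsion_sum0; apply: sum0_img. Qed.

Lemma C0_gt0 : (0 < C0)%N.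
Proof. by rewrite /CC muln_gt0 expn_gt0 /= /Mo part_gt0. Qed.

Lemma sum_delta (F : V -> rat) g : \sum_h F h * (h == g)%:R = F g.
Proof.
rewrite (bigD1 g) //= eqxx mulr1 big1 ?addr0 //.
by move=> h /negbTE ->; rewrite mulr0.
Qed.

Lemma pairing m (g : V) (j : 'I_n) (i0 : 'I_n) :
  annihilates_sandpile n m ->
  (m%:R * (rr (v0 n) i0 g - rr (v0 n) i0 (flip g j)) : rat) \is a Num.int.
Proof.
move=> Hm.
have n0 : (0 < n)%N by apply: leq_trans hn.
have Ht : coker_torsion (dvec g - dvec (flip g j)).
  by exists C0; split; [exact: C0_gt0 | exact: edge_img].
have [y Hy] := Hm _ Ht.
set Y := fun h => y (enum_rank h) 0.
have HY : forall h, lapf Y h = ((h == g)%:R - (h == flip g j)%:R) *+ m.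
  move=> h; rewrite -bridge Hy mulmxnE !mxE enum_rankK //.
set r := rr (v0 n) i0.
have E1 : \sum_h r h * (lapf Y h)%:~R = m%:R * (r g - r (flip g j)).
  under eq_bigr => h _ do rewrite HY rmorphMn rmorphB /= !rmorph_nat mulrnAr mulrBr.
  by rewrite sumrMnl sumrB !sum_delta mulr_natl.
have E2 : \sum_h r h * (lapf Y h)%:~R = (Y (v0 n))%:~R - (Y (flip (v0 n) i0))%:~R.
  under eq_bigr => h _ do rewrite lapf_intr.
  rewrite lapf_sym.
  under eq_bigr => h _ do rewrite lap_rr // mulrBl.
  rewrite sumrB.
  by rewrite (eq_bigr (fun h => (Y h)%:~R * (h == v0 n)%:R)) ?sum_delta;
    [rewrite (eq_bigr (fun h => (Y h)%:~R * (h == flip (v0 n) i0)%:R)) ?sum_delta // => h _; rewrite mulrC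
    | move=> h _; rewrite mulrC].
rewrite -E1 E2.
by apply: rpredB; apply: rpred_int.
Qed.

Definition pref (k : nat) : V := [ffun j : 'I_n => (j < k)%N].

Lemma sum_lt (k m : nat) : (\sum_(j < m) ((j < k)%N : nat))%N = minn k m.
Proof.
elim: m => [|m IH]; first by rewrite big_ord0 minn0.
rewrite big_ord_recr /= IH; lia.
Qed.

Lemma wt_pref k : (k <= n)%N -> wt (pref k) = k.
Proof.
move=> Hk; rewrite /wt (eq_bigr (fun j : 'I_n => ((j < k)%N : nat))); last by move=> j _; rewrite ffunE.
by rewrite sum_lt; lia.
Qed.

Lemma flip_pref k (Hk : (k < n)%N) : flip (pref k) (Ordinal Hk) = pref k.+1.
Proof.
apply/ffunP => j; rewrite !ffunE.
case: (j =P Ordinal Hk) => [-> | Hj]; first by rewrite /= ltnn ltnS leqnn.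
have Hjk : (j == k :> nat) = false by apply/eqP => E; apply: Hj; apply: val_inj.
by rewrite [in RHS]ltnS [in RHS]leq_eqVlt Hjk.
Qed.

Lemma pref_at k (i : 'I_n) : pref k i = (i < k)%N.
Proof. by rewrite ffunE. Qed.

Lemma rr0 (g : V) i : rr (v0 n) i g =
  if g i then - (Kc n (wt g).-1 / 2%:R ^+ n) else Kc n (wt g) / 2%:R ^+ n.
Proof. by rewrite /rr vxorv0 rr_val. Qed.

Lemma bigmax_attained (r : seq nat) (F : nat -> nat) :
  r != [::] -> exists2 k, k \in r & (\max_(i <- r) F i)%N = F k.
Proof.
elim: r => [//|a r IH] _; rewrite big_cons.
case: (eqVneq r [::]) => [-> | Hr].
  by exists a; rewrite ?mem_head // big_nil maxn0.
have [k Hk Ek] := IH Hr; rewrite Ek.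
case: (leqP (F k) (F a)) => H.
  by exists a; rewrite ?mem_head //; apply/maxn_idPl.
by exists k; rewrite ?inE ?Hk ?orbT //; apply/maxn_idPr; apply: ltnW.
Qed.

Lemma LB m : (0 < m)%N -> annihilates_sandpile n m -> (2 ^ EE n %| m)%N.
Proof.
move=> Hm Hann.
have n0 : (0 < n)%N by apply: leq_trans hn.
have Hl : (n.-1 < n)%N by rewrite prednK.
set lst := Ordinal Hl.
rewrite /EE.
case: (leqP (V2 n) (logn 2 n + n - 1)) => HV.

  have := pairing (pref n.-1) lst lst Hann.
  rewrite flip_pref prednK // !rr0 !pref_at /= ltnn Hl wt_pref ?leq_pred // wt_pref //.
  exact: LB1.

set P := fun k => ((1 <= k < n) && (logn 2 k + k == V2 n))%N.
have exP : exists k, P k.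
  have : index_iota 1 n != [::] by rewrite -size_eq0 size_iota; lia.
  move/(bigmax_attained (fun x => logn 2 x + x)%N) => [k Hk Ek].
  by exists k; rewrite /P -mem_index_iota Hk /V2 Ek eqxx.
have ubP : forall k, P k -> (k <= n)%N by move=> k /andP [/andP [_ /ltnW]].
case: (ex_maxnP exP ubP) => x /andP [/andP [Hx1 Hxn] /eqP Hx] Hmax.
have Hx' : (x.-1 < n)%N by lia.
have := pairing (pref x.-1) (Ordinal Hx') lst Hann.
rewrite flip_pref prednK // !rr0 !pref_at /=.
rewrite (_ : (n.-1 < x.-1)%N = false); last by lia.
rewrite (_ : (n.-1 < x)%N = false); last by lia.
rewrite !wt_pref; try lia.
apply: LB2 => //.
move=> k Hk1 Hk2.
have Hge : (logn 2 k + k <= V2 n)%N by apply: V2_ge; lia.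
rewrite leq_eqVlt in Hge; case/orP: Hge => [/eqP Ek|//].
have : P k by rewrite /P Ek eqxx andbT; apply/andP; split; lia.
by move/Hmax; lia.
Qed.

End Main.

Lemma min_exists (Q : nat -> Prop) m : Q m ->
  exists c, Q c /\ forall m', Q m' -> (c <= m')%N.
Proof.
elim/ltn_ind: m => m IH Qm.
case: (classic (exists2 m', (m' < m)%N & Q m')) => [[m' Hm' Qm'] | H].
  exact: IH Qm'.
exists m; split => // m' Qm'; rewrite leqNgt; apply/negP => Hlt.
by apply: H; exists m'.
Qed.

Section Final.
Variable n : nat.
Hypothesis hn : (2 <= n)%N.

Lemma ann_sub a b : annihilates_sandpile n a -> annihilates_sandpile n b -> (b <= a)%N ->
  annihilates_sandpile n (a - b).
Proof.
move=> Ha Hb Hba v Hv.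
rewrite GRing.mulrnBr //.
have := img_add (Ha v Hv) (img_opp (Hb v Hv)).
done.
Qed.

Lemma ann_mul a k : annihilates_sandpile n a -> annihilates_sandpile n (k * a).
Proof.
move=> Ha v Hv; rewrite mulnC GRing.mulrnA; apply: img_muln; exact: Ha.
Qed.

Lemma logn_CC : logn 2 (CC n) = EE n.
Proof.
rewrite /CC lognM ?expn_gt0 ?part_gt0 // (pfactorK _ (isT : prime 2)).
by rewrite logn_coprime ?addn0 // coprime2n Mo_odd.
Qed.

End Final.

Local Close Scope ring_scope.

Theorem mainTheorem3 (n : nat) (hn : (2 <= n)%N) :
  exists c1 : nat, is_sandpile_exponent n c1 /\
    logn 2 c1 = maxn (\max_(1 <= x < n) (logn 2 x + x))%N (logn 2 n + n - 1)%N.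
Proof.
have := @min_exists (fun m => (0 < m)%N /\ annihilates_sandpile n m) (CC n)
  (conj (C0_gt0 n) (ann_C0 hn)).
move=> [c1 [[Hc1 Hann] Hmin]].
exists c1; split.
  by split => // m' Hm' Ham'; apply: Hmin.
have Hdiv : (c1 %| CC n)%N.
  rewrite /dvdn; apply/eqP.
  have Hr : annihilates_sandpile n (CC n %% c1).
    have -> : (CC n %% c1 = CC n - CC n %/ c1 * c1)%N.
      by rewrite {2}(divn_eq (CC n) c1) addKn.
    apply: ann_sub; [exact: ann_C0 | exact: ann_mul | exact: leq_trunc_div].
  case: (posnP (CC n %% c1)) => // Hpos.
  have := Hmin _ (conj Hpos Hr).
  by rewrite leqNgt ltn_pmod.
have HL := LB hn Hc1 Hann.
rewrite (pfactor_dvdn _ (isT : prime 2) Hc1) in HL.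
change (logn 2 c1 = EE n).
apply/eqP; rewrite eqn_leq HL andbT -(logn_CC n).
by apply: dvdn_leq_log => //; exact: C0_gt0.
Qed.
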